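(* Let $\mathcal{I}$ be the input simplicial model, $\langle\mathcal{I},\mathcal{P},\Psi\rangle$ a simplicial protocol and $\langle\mathcal{I},\mathcal{O},\Delta\rangle$ a simplicial task, and let $\mathbf{P}=\kappa(\langle\mathcal{I},\mathcal{P},\Psi\rangle)$ and $\mathbf{T}=\kappa(\langle\mathcal{I},\mathcal{O},\Delta\rangle)$. If there exists a morphism of partial epistemic models $\delta_{\mathrm{krip}}:\mathcal{I}[\![\mathbf{P}]\!]\to\mathcal{I}[\![\mathbf{T}]\!]$ such that for every world $(E,p)$ of $\mathcal{I}[\![\mathbf{P}]\!]$ there exists $(E',t)\in\delta_{\mathrm{krip}}((E,p))$ with $E\subseteq E'$, then there exists a chromatic simplicial map $\delta_{\mathrm{top}}:\mathcal{P}\to\mathcal{O}$ such that for every $X\in\mathcal{F}(\mathcal{I})$ and every $Y\in\Psi(X)$ there is $Z\in\Delta(X)$ with $\delta_{\mathrm{top}}(Y)\subseteq Z$.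
   Context: Agents $\mathsf{Ag}=\{0,\dots,n-1\}$, $n>1$; $\mathsf{Value}=\mathsf{Ag}$; atoms $\mathsf{At}_a=\{\mathrm{input}_a^v\mid v\in\mathsf{Value}\}$, $\mathsf{At}_B=\bigcup_{a\in B}\mathsf{At}_a$. A chromatic simplicial complex $\langle V,S,\chi\rangle$ here has a finite vertex set $V\subseteq\mathsf{Ag}\times\mathsf{Value}$, coloring $\chi((a,v))=a$, and a set $S$ of nonempty subsets of $V$ closed under nonempty subsets, in which distinct vertices of a simplex have distinct colors; facets are maximal simplices, $\mathcal{F}(\mathcal{C})$ the set of facets, $\chi(X)=\{\chi(v)\mid v\in X\}$. A chromatic simplicial map $\mathcal{C}\to\mathcal{C}'$ is a color-preserving vertex map sending simplices to simplices. The input simplicial model $\mathcal{I}$ has vertices $\mathsf{Ag}\times\mathsf{Value}$ and simplices all nonempty subsets of sets $\{(0,v_0),\dots,(n-1,v_{n-1})\}$; facets labeled $\ell^{\mathcal{I}}(X)=\{\mathrm{input}_a^v\mid(a,v)\in X\}$; as a partial epistemic model its worlds are its facets, $X\sim_aY$ iff $a\in\chi(X\cap Y)$, labels $\ell^{\mathcal{I}}$. A facet map $\Theta:\mathcal{F}(\mathcal{C})\to\mathcal{P}(\mathcal{F}(\mathcal{D}))$ satisfies $\bigcup_{Y\in\Theta(X)}\chi(Y)\subseteq\chi(X)$ and $\mathcal{F}(\mathcal{D})=\bigcup_X\Theta(X)$. A simplicial task $\langle\mathcal{I},\mathcal{O},\Delta\rangle$: a complex $\mathcal{O}$ and facet map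 $\Delta:\mathcal{F}(\mathcal{I})\to\mathcal{P}(\mathcal{F}(\mathcal{O}))$. A simplicial protocol $\langle\mathcal{I},\mathcal{P},\Psi\rangle$: a complex $\mathcal{P}$ and facet map $\Psi$ with $\chi(Y\cap Y')\subseteq\chi(X\cap X')$ whenever $Y\in\Psi(X)$, $Y'\in\Psi(X')$. Translation $\kappa(\langle\mathcal{I},\mathcal{D},\Theta\rangle)$: action model with actions $\mathcal{F}(\mathcal{D})$, $Y\sim_aY'$ iff $a\in\chi(Y\cap Y')$, $\mathsf{pre}(Y)=\bigvee\{\bigwedge\ell^{\mathcal{I}}(X)\mid Y\in\Theta(X)\}$. Partial epistemic models $\langle W,\sim,L\rangle$: $W$ finite, $\sim_a$ symmetric transitive, $L:W\to\mathcal{P}(\mathsf{At})$; $\mathrm{Alive}(w)=\{a\mid w\sim_aw\}$; $w\sim_Aw'$ means $w\sim_aw'$ for all $a\in A$; epistemic formulas with $K_a$ interpreted over $\sim_a$. Partial product update $\mathcal{I}[\![\mathbf{A}]\!]$: with $\langle X\rangle_t=\{Y\mid X\sim^{\mathcal{I}}_{\mathrm{Alive}(t)}Y,\ \mathcal{I},Y\models\mathsf{pre}(t)\}$, worlds $(\langle X\rangle_t,t)$ with $\mathrm{Alive}(t)\subseteq\mathrm{Alive}(X)$, $\mathcal{I},X\models\mathsf{pre}(t)$; $(\langle X\rangle_t,t)\sim_a(\langle Y\rangle_s,s)$ iff $X\sim^{\mathcal{I}}_aY$ and $t\sim_as$; label $\bigcap_{X'\in\langle X\rangle_t}\ell^{\mathcal{I}}(X')$.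 A morphism $f:\langle W,\sim,L\rangle\to\langle W',\sim',L'\rangle$ is $f:W\to\mathcal{P}(W')$ with: (i) $w\sim_aw'$ implies $u\sim'_au'$ for all $u\in f(w),u'\in f(w')$; (ii) each $w$ has some $w'\in f(w)$ with $f(w)=\{u\mid w'\sim'_{\mathrm{Alive}(w)}u\}$; (iii) $L(w)\cap\mathsf{At}_{\mathrm{Alive}(w)}=L'(w')\cap\mathsf{At}_{\mathrm{Alive}(w)}$ for $w'\in f(w)$. *)

(* Defs.v *)
From mathcomp Require Import all_boot.
Set Implicit Arguments. Unset Strict Implicit. Unset Printing Implicit Defensive.

Section Defs.
Variable n : nat.

(* agents = values = 'I_n ; a vertex (a,v) has colour a ; the atom input_a^v
   is encoded by the pair (a,v), so an atom set is a {set vert}. *)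
Definition vert := ('I_n * 'I_n)%type.
Definition simplex := {set vert}.

Definition colors (X : simplex) : {set 'I_n} := [set v.1 | v in X].
Definition chromatic (X : simplex) : bool :=
  [forall u in X, forall v in X, (u.1 == v.1) ==> (u == v)].

Definition is_complex (V : {set vert}) (S : {set simplex}) : Prop :=
  (forall X, X \in S -> [/\ X != set0, X \subset V & chromatic X]) /\
  (forall X Y, X \in S -> Y != set0 -> Y \subset X -> Y \in S) /\
  (forall v, v \in V -> [set v] \in S).

Definition facets (S : {set simplex}) : {set simplex} :=
  [set X in S | [forall Y in S, (X \subset Y) ==> (Y == X)]].

Definition chromatic_map (V : {set vert}) (S : {set simplex})
  (V' : {set vert}) (S' : {set simplex}) (d : vert -> vert) : Prop :=
  (forall v, v \in V -> d v \in V' /\ (d v).1 = v.1) /\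
  (forall X, X \in S -> d @: X \in S').

Definition VI : {set vert} := setT.
Definition SI : {set simplex} := [set X | (X != set0) && chromatic X].
Definition FI : {set simplex} := facets SI.

Definition is_facet_map (SC SD : {set simplex})
  (Th : simplex -> {set simplex}) : Prop :=
  (forall X, X \in facets SC -> Th X \subset facets SD) /\
  (forall X Y, X \in facets SC -> Y \in Th X -> colors Y \subset colors X) /\
  (facets SD = \bigcup_(X in facets SC) Th X).

Definition is_task (VO : {set vert}) (SO : {set simplex})
  (De : simplex -> {set simplex}) : Prop :=
  is_complex VO SO /\ is_facet_map SI SO De.

Definition is_protocol (VP : {set vert}) (SP : {set simplex})
  (Ps : simplex -> {set simplex}) : Prop :=
  is_complex VP SP /\ is_facet_map SI SP Ps /\
  (forall X X' Y Y', X \in FI -> X' \in FI -> Y \in Ps X -> Y' \in Ps X' ->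
     colors (Y :&: Y') \subset colors (X :&: X')).

Definition alive (W : finType) (acc : 'I_n -> rel W) (w : W) : {set 'I_n} :=
  [set a | acc a w w].
Definition accA (W : finType) (acc : 'I_n -> rel W) (A : {set 'I_n}) (w w' : W)
  : bool := [forall a in A, acc a w w'].
Definition atomsOf (A : {set 'I_n}) : {set vert} := [set p | p.1 \in A].

Definition is_morphism (W1 W2 : finType)
  (acc1 : 'I_n -> rel W1) (L1 : W1 -> {set vert})
  (acc2 : 'I_n -> rel W2) (L2 : W2 -> {set vert})
  (f : W1 -> {set W2}) : Prop :=
  [/\ (forall a w w', acc1 a w w' ->
         forall u u', u \in f w -> u' \in f w' -> acc2 a u u'),
      (forall w, exists2 w', w' \in f w &
         f w = [set u | accA acc2 (alive acc1 w) w' u]) &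
      (forall w w', w' \in f w ->
         L1 w :&: atomsOf (alive acc1 w) = L2 w' :&: atomsOf (alive acc1 w))].

Definition accI (a : 'I_n) (X Y : simplex) : bool := a \in colors (X :&: Y).
Definition accIA (A : {set 'I_n}) (X Y : simplex) : bool :=
  [forall a in A, accI a X Y].
Definition aliveI (X : simplex) : {set 'I_n} := [set a | accI a X X].
Definition accAct (a : 'I_n) (t s : simplex) : bool := a \in colors (t :&: s).
Definition aliveAct (t : simplex) : {set 'I_n} := [set a | accAct a t t].

(* I, Y |= pre(t), where pre(t) = \/ { /\ l(X) | t \in Th(X) } and the
   label of a facet X of I is l(X) = X (as a set of atoms) *)
Definition preSat (Th : simplex -> {set simplex}) (t Y : simplex) : bool :=
  [exists X in FI, (t \in Th X) && (X \subset Y)].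

Definition cls (Th : simplex -> {set simplex}) (X t : simplex) : {set simplex} :=
  [set Y in FI | accIA (aliveAct t) X Y && preSat Th t Y].

(* X is a legitimate representative giving the world (<X>_t, t) *)
Definition isRep (SD : {set simplex}) (Th : simplex -> {set simplex})
  (X t : simplex) : bool :=
  [&& X \in FI, t \in facets SD, aliveAct t \subset aliveI X & preSat Th t X].

Definition isWorld (SD : {set simplex}) (Th : simplex -> {set simplex})
  (w : {set simplex} * simplex) : bool :=
  [exists X, isRep SD Th X w.2 && (w.1 == cls Th X w.2)].

Definition puW (SD : {set simplex}) (Th : simplex -> {set simplex}) : finType :=
  {w : {set simplex} * simplex | isWorld SD Th w}.

Definition puAcc (SD : {set simplex}) (Th : simplex -> {set simplex})
  (a : 'I_n) : rel (puW SD Th) := fun w w' =>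
  [exists X, exists Y,
     [&& isRep SD Th X (val w).2, isRep SD Th Y (val w').2,
         (val w).1 == cls Th X (val w).2, (val w').1 == cls Th Y (val w').2,
         accI a X Y & accAct a (val w).2 (val w').2]].

Definition puLab (SD : {set simplex}) (Th : simplex -> {set simplex})
  (w : puW SD Th) : {set vert} := \bigcap_(X in (val w).1) X.

End Defs.

(* Main.v *)
Require Import Defs.
From mathcomp Require Import all_boot.
Set Implicit Arguments. Unset Strict Implicit. Unset Printing Implicit Defensive.

Section Help.
Variable n : nat.

Lemma facet_sub (S : {set simplex n}) X Y :
  X \in facets S -> Y \in S -> X \subset Y -> Y = X.
Proof.
rewrite inE => /andP[_ /forallP H] YS XY.
by have /implyP/(_ YS)/implyP/(_ XY)/eqP := H Y.
Qed.

Lemma facetsS (S : {set simplex n}) X : X \in facets S -> X \in S.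
Proof. by rewrite inE => /andP[]. Qed.

Lemma in_facet (S : {set simplex n}) X :
  X \in S -> exists2 Y, Y \in facets S & X \subset Y.
Proof.
move=> XS.
have [Y /maxsetP [YS Ymax] XY] := maxset_exists (P := fun B => B \in S) XS.
exists Y => //; rewrite inE YS /=; apply/forallP => Z; apply/implyP => ZS.
by apply/implyP => YZ; apply/eqP; apply: Ymax.
Qed.

Lemma colorsP (X : simplex n) a :
  reflect (exists2 v, v \in X & v.1 = a) (a \in colors X).
Proof.
apply: (iffP imsetP) => [[v vX ->]|[v vX <-]]; by exists v.
Qed.

Lemma chromP (X : simplex n) u v :
  chromatic X -> u \in X -> v \in X -> u.1 = v.1 -> u = v.
Proof.
move=> /forallP H uX vX e.
have /implyP/(_ uX)/forallP/(_ v)/implyP/(_ vX)/implyP := H u.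
by move=> /(_ (introT eqP e))/eqP.
Qed.

Lemma facet_eqI (X X0 : simplex n) :
  X \in FI n -> X0 \in FI n -> X0 \subset X -> X = X0.
Proof. by move=> XF X0F; apply: facet_sub X0F (facetsS XF). Qed.

End Help.

Theorem lemmaA4 (n : nat) (Hn : 1 < n)
  (VP : {set vert n}) (SP : {set simplex n}) (Ps : simplex n -> {set simplex n})
  (VO : {set vert n}) (SO : {set simplex n}) (De : simplex n -> {set simplex n}) :
  is_protocol VP SP Ps ->
  is_task VO SO De ->
  (exists f : puW SP Ps -> {set puW SO De},
     is_morphism (puAcc (Th:=Ps)) (@puLab n SP Ps)
                 (puAcc (Th:=De)) (@puLab n SO De) f /\
     (forall w, exists2 w', w' \in f w & (val w).1 \subset (val w').1)) ->
  exists d : vert n -> vert n,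
    chromatic_map VP SP VO SO d /\
    (forall X Y, X \in FI n -> Y \in Ps X ->
       exists2 Z, Z \in De X & d @: Y \subset Z).
Proof.
move=> [[cP [clP sgP]] [[fP1 [fP2 fP3]] prot]] [[cO [clO _]] _] [f [[m1 m2 _] hx]].
have repP : forall X Y, X \in FI n -> Y \in Ps X -> isRep SP Ps X Y.
  move=> X Y XF YP; rewrite /isRep XF (subsetP (fP1 X XF) Y YP) /=.
  apply/andP; split.
    by apply/subsetP => a; rewrite !inE /accAct /accI !setIid; apply: (subsetP (fP2 X Y XF YP)).
  by apply/existsP; exists X; rewrite XF YP subxx.
have mkW : forall X Y, X \in FI n -> Y \in Ps X -> isWorld SP Ps (cls Ps X Y, Y).
  by move=> X Y XF YP; apply/existsP; exists X; rewrite repP //= eqxx.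
have repPs : forall X t, isRep SP Ps X t -> t \in Ps X /\ X \in FI n.
  move=> X t /and4P[XF _ _ /existsP[X0 /and3P[X0F tP X0X]]].
  by rewrite (facet_eqI XF X0F X0X).
have repDe : forall X t, isRep SO De X t -> t \in De X /\ t \in SO.
  move=> X t /and4P[XF tF _ /existsP[X0 /and3P[X0F tP X0X]]].
  by rewrite (facet_eqI XF X0F X0X) tP (facetsS tF).
have Lacc : forall (w w' : puW SP Ps) p, p \in (val w).2 -> p \in (val w').2 ->
    puAcc p.1 w w'.
  move=> w w' p pw pw'.
  have /existsP[X /andP[rX eX]] := valP w.
  have /existsP[X' /andP[rX' eX']] := valP w'.
  have [tP XF] := repPs _ _ rX. have [tP' XF'] := repPs _ _ rX'.
  apply/existsP; exists X; apply/existsP; exists X'; rewrite rX rX' eX eX' /=.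
  rewrite /accI /accAct; apply/andP; split.
    apply: (subsetP (prot X X' _ _ XF XF' tP tP')).
    by apply/colorsP; exists p; rewrite // inE pw pw'.
  by apply/colorsP; exists p; rewrite // inE pw pw'.
have images : forall w u p, u \in f w -> p \in (val w).2 ->
    exists2 q, q \in (val u).2 & q.1 = p.1.
  move=> w u p Hu pw.
  have := m1 p.1 w w (Lacc w w p pw pw) u u Hu Hu.
  move=> /existsP[X /existsP[Y /and3P[_ _ /and4P[_ _ _ /colorsP[q]]]]].
  by rewrite setIid => qt qe; exists q.
have uniq : forall w w' u u' p q q', u \in f w -> u' \in f w' ->
    p \in (val w).2 -> p \in (val w').2 -> q \in (val u).2 -> q' \in (val u').2 ->
    q.1 = p.1 -> q'.1 = p.1 -> q = q'.
  move=> w w' u u' p q q' Hu Hu' pw pw' qu qu' e e'.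
  have := m1 p.1 w w' (Lacc w w' p pw pw') u u' Hu Hu'.
  move=> /existsP[X /existsP[Y /and3P[rX rY /and4P[_ _ _ /colorsP[r]]]]].
  rewrite inE => /andP[rt rt'] re.
  have [_ /cO[_ _ ch]] := repDe _ _ rX. have [_ /cO[_ _ ch']] := repDe _ _ rY.
  rewrite (chromP ch qu rt); last by rewrite e re.
  by rewrite (chromP ch' qu' rt') // e' re.
pose d p := if [pick q | [exists w, exists u, [&& u \in f w, p \in (val w).2,
                 q \in (val u).2 & q.1 == p.1]]] is Some q then q else p.
have dP : forall w u p, u \in f w -> p \in (val w).2 ->
    d p \in (val u).2 /\ (d p).1 = p.1.
  move=> w u p Hu pw; have [r ru re] := images w u p Hu pw.
  rewrite /d; case: pickP => [q /existsP[w1 /existsP[u1 /and4P[Hu1 pw1 qu1 /eqP qe]]]|none].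
    by rewrite (uniq w1 w u1 u p q r).
  have := none r; rewrite (_ : [exists w0, _] = true) //.
  by apply/existsP; exists w; apply/existsP; exists u; rewrite Hu pw ru re eqxx.
have facetW : forall Y, Y \in facets SP -> exists X, exists w : puW SP Ps, 
    [/\ X \in FI n, Y \in Ps X & val w = (cls Ps X Y, Y)].
  move=> Y; rewrite fP3 => /bigcupP[X XF YP].
  by exists X, (@exist _ (fun w => isWorld SP Ps w) (cls Ps X Y, Y) (mkW X Y XF YP)).
have tSO : forall u : puW SO De, (val u).2 \in SO.
  by move=> u; have /existsP[X /andP[/repDe[] _ ]] := valP u.
exists d; split; [split|].
- move=> v vP; have [Y YF vY] := in_facet (sgP v vP).
  have [X [w [XF YP ew]]] := facetW Y YF.
  have [u Hu _] := m2 w.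
  have pw : v \in (val w).2 by rewrite ew; rewrite sub1set in vY.
  have [H1 H2] := dP w u v Hu pw.
  split => //; have [_ /subsetP tV _] := cO _ (tSO u); exact: tV.
- move=> Z ZS; have [Y YF ZY] := in_facet ZS.
  have [X [w [XF YP ew]]] := facetW Y YF.
  have [u Hu _] := m2 w.
  apply: (clO _ _ (tSO u)).
    have [Z0 _ _] := cP Z ZS; by rewrite imset_eq0.
  apply/subsetP => _ /imsetP[p pZ ->].
  have pw : p \in (val w).2 by rewrite ew (subsetP ZY).
  by have [] := dP w u p Hu pw.
- move=> X Y XF YP.
  pose w : puW SP Ps := @exist _ (fun w => isWorld SP Ps w) (cls Ps X Y, Y) (mkW X Y XF YP).
  have [w' Hw' sub] := hx w.
  have XE : X \in (val w).1.
    rewrite /= inE XF /=; apply/andP; split.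
      apply/forallP => a; apply/implyP; rewrite inE /accAct /accI !setIid.
      exact: (subsetP (fP2 X Y XF YP)).
    by apply/existsP; exists X; rewrite XF YP subxx.
  have /existsP[X1 /andP[rX1 /eqP eX1]] := valP w'.
  have := subsetP sub X XE; rewrite eX1 inE => /and3P[_ _ /existsP[X2 /and3P[X2F tP X2X]]].
  exists (val w').2; first by rewrite (facet_eqI XF X2F X2X).
  apply/subsetP => _ /imsetP[p pY ->].
  by have [] := dP w w' p Hw' pY.
Qed.
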